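(* Let $\alpha$ be a graph function on a strongly connected digraph $G$ and $v$ a vertex with $\rho^R_v>0$. Then there exist edges $(u,v)$ and $(v,w)$ of $G$ such that $y_v+\frac{\rho^R_v}{2}\le\frac{y_u+y_w}{2}$.
   Context: $G$ is a strongly connected directed graph (self-loops allowed); a graph function assigns a real weight $\alpha_{uv}$ to each edge. $\alpha_v^{\text{in}}=\max_{u:(u,v)\in G}\alpha_{uv}$, $\alpha_v^{\text{out}}=\max_{w:(v,w)\in G}\alpha_{vw}$, $\rho^R_v=\max\{0,\alpha_v^{\text{out}}-\alpha_v^{\text{in}}\}$. A raising operation at $v$: if $\rho^R_v>0$ add $\rho^R_v/2$ to each incoming edge weight $\alpha_{uv}$ ($u\ne v$) and subtract it from each outgoing $\alpha_{vw}$ ($w\neq v$); otherwise do nothing. Starting from $\alpha$, for any infinite sequence of raising operations in which every vertex occurs infinitely often, the cumulative amount $r_v(t)$ by which each vertex has been raised converges to a limit vector $r^*$ independent of the sequence. The heights are $y_v=-r^*_v$. *)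

(* Defs.v *)
From HB Require Import structures.
From mathcomp Require Import all_boot all_order all_algebra.
From mathcomp Require Import all_classical all_reals all_analysis.
Set Implicit Arguments. Unset Strict Implicit. Unset Printing Implicit Defensive.
Import Order.TTheory GRing.Theory Num.Theory.
Local Open Scope ring_scope.

(* A digraph on a finite vertex type V is an edge relation e : rel V
   (self-loops allowed).  Strong connectivity: every vertex reaches every
   vertex along directed edges. *)
Definition strongly_connected (V : finType) (e : rel V) : Prop :=
  forall x y : V, connect e x y.

Section GraphFun.
Variables (R : realType) (V : finType) (e : rel V).

(* alpha_v^in = max_{u : (u,v) in G} alpha_{uv}
   (0 by convention if v has no in-edge, which in a strongly connected graph
   only happens for the single loopless vertex). *)
Definition alpha_in (a : V -> V -> R) (v : V) : R :=
  if [pick u | e u v] is Some u0 then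
    \big[Num.max/a u0 v]_(u | e u v) a u v
  else 0.

Definition alpha_out (a : V -> V -> R) (v : V) : R :=
  if [pick w | e v w] is Some w0 then
    \big[Num.max/a v w0]_(w | e v w) a v w
  else 0.

Definition rhoR (a : V -> V -> R) (v : V) : R :=
  Num.max 0 (alpha_out a v - alpha_in a v).

Definition raise_op (a : V -> V -> R) (v : V) : V -> V -> R :=
  let r := rhoR a v in
  if 0 < r then
    fun x y =>
      if (y == v) && (x != v) && e x y then a x y + r / 2
      else if (x == v) && (y != v) && e x y then a x y - r / 2
      else a x y
  else a.

(* State after t raising operations along the sequence s, starting from a:
   (current graph function, cumulative raise vector r(t)). *)
Fixpoint raise_state (a : V -> V -> R) (s : nat -> V) (t : nat)
  : (V -> V -> R) * (V -> R) :=
  match t with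
  | 0%N => (a, fun _ => 0)
  | t'.+1 =>
      let st := raise_state a s t' in
      let v := s t' in
      let r := rhoR st.1 v in
      (raise_op st.1 v,
       fun x => st.2 x + (if (x == v) && (0 < r) then r / 2 else 0))
  end.

Definition cum_raise (a : V -> V -> R) (s : nat -> V) (t : nat) (v : V) : R :=
  (raise_state a s t).2 v.

End GraphFun.

Definition every_vertex_inf_often (V : finType) (s : nat -> V) : Prop :=
  forall (v : V) (N : nat), exists2 t : nat, (N <= t)%N & s t = v.

(* Main.v *)
Require Import Defs.
From HB Require Import structures.
From mathcomp Require Import all_boot all_order all_algebra.
From mathcomp Require Import all_classical all_reals all_analysis.
Import Order.TTheory GRing.Theory Num.Theory.
Import numFieldNormedType.Exports.
Local Open Scope classical_set_scope.
Local Open Scope ring_scope.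
From mathcomp Require Import lra.
Section S.
Variables (R : realType) (V : finType) (e : rel V).

Lemma in_ge (b : V -> V -> R) u v : e u v -> b u v <= alpha_in e b v.
Proof.
move=> huv; rewrite /alpha_in; case: pickP => [u0 _|/(_ u)]; last by rewrite huv.
exact: le_bigmax_cond.
Qed.

Lemma out_ge (b : V -> V -> R) v w : e v w -> b v w <= alpha_out e b v.
Proof.
move=> hvw; rewrite /alpha_out; case: pickP => [w0 _|/(_ w)]; last by rewrite hvw.
exact: le_bigmax_cond.
Qed.

Lemma in_eq (b : V -> V -> R) u v : e u v -> exists2 u', e u' v & alpha_in e b v = b u' v.
Proof.
move=> huv; rewrite /alpha_in; case: pickP => [u0 hu0|/(_ u)]; last by rewrite huv.
case: (@arg_maxP _ _ _ _ (fun x => e x v) (fun x => b x v) hu0) => i Pi Hi.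
exists i => //; apply/eqP; rewrite eq_le; apply/andP; split.
  by apply/bigmax_leP; split; [exact: Hi | exact: Hi].
exact: le_bigmax_cond.
Qed.

Lemma out_eq (b : V -> V -> R) v w : e v w -> exists2 w', e v w' & alpha_out e b v = b v w'.
Proof.
move=> hvw; rewrite /alpha_out; case: pickP => [w0 hw0|/(_ w)]; last by rewrite hvw.
case: (arg_maxP (fun x => b v x) hw0) => i Pi Hi.
exists i => //; apply/eqP; rewrite eq_le; apply/andP; split.
  by apply/bigmax_leP; split => //; apply: Hi.
exact: le_bigmax_cond.
Qed.

Lemma inv (a : V -> V -> R) s t x y : e x y ->
  (raise_state e a s t).1 x y = a x y + (raise_state e a s t).2 y - (raise_state e a s t).2 x.
Proof.
move=> hxy; elim: t => [|t IH] /=; first by rewrite addr0 subr0.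
set st := raise_state e a s t; set v := s t.
rewrite /raise_op /=; case: ifP => hr; last by rewrite !andbF !addr0 IH.
rewrite hxy !andbT IH -/st.
have [->|hy] := eqVneq y v; have [->|hx] := eqVneq x v;
  rewrite ?eqxx ?(negbTE hy) ?(negbTE hx) /=; lra.
Qed.
Lemma conn_in x y : connect e x y -> x != y -> exists u, e u y.
Proof.
move=> /connectP [p]; elim/last_ind: p => [|p z _] /=; first by move=> _ -> /eqP.
rewrite rcons_path last_rcons => /andP [_ h] -> _; by exists (last x p).
Qed.

Lemma conn_out x y : connect e x y -> x != y -> exists w, e x w.
Proof.
move=> /connectP [[|z p]] /=; first by move=> _ -> /eqP.
by move=> /andP [h _] _ _; exists z.
Qed.

Lemma step (a : V -> V -> R) s t :
  alpha_out e (raise_state e a s t).1 (s t) - alpha_in e (raise_state e a s t).1 (s t)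
  <= 2 * ((raise_state e a s t.+1).2 (s t) - (raise_state e a s t).2 (s t)).
Proof.
rewrite /= eqxx /=.
set r := rhoR _ _ _.
have hr : alpha_out e (raise_state e a s t).1 (s t) - alpha_in e (raise_state e a s t).1 (s t) <= r.
  by rewrite /r /rhoR le_max lexx orbT.
case: ifP => h; first by lra.
have : r <= 0 by rewrite leNgt h.
lra.
Qed.
End S.


Theorem lemma4 (R : realType) (V : finType) (e : rel V)
    (a : V -> V -> R) (s : nat -> V) (rstar : V -> R) :
  strongly_connected e ->
  every_vertex_inf_often s ->
  (forall x : V, (fun t => cum_raise e a s t x) @ \oo --> rstar x) ->
  forall v : V, 0 < rhoR e a v ->
  exists u w : V,
    [/\ e u v, e v w &
        - rstar v + rhoR e a v / 2 <= (- rstar u + - rstar w) / 2].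
Proof.
move=> Hsc Hinf Hc v hrho.
have Hall : forall eps : R, 0 < eps -> exists N, forall t, (N <= t)%N ->
    forall x, `|rstar x - cum_raise e a s t x| < eps.
  move=> eps he.
  have : \forall t \near \oo, forall x, `|rstar x - cum_raise e a s t x| < eps.
    by apply: filter_forall => x; exact: (cvgrPdist_lt _ _).1 (Hc x) eps he.
  by move=> [N _ HN]; exists N => t /HN.
have hpos : 0 < alpha_out e a v - alpha_in e a v.
  by move: hrho; rewrite /rhoR lt_max ltxx.
have hrhoE : rhoR e a v = alpha_out e a v - alpha_in e a v.
  by rewrite /rhoR max_r // ltW.
have hex : (exists u, e u v) \/ (exists w, e v w).
  case: (pickP (fun u => e u v)) => [u hu|Hn]; first by left; exists u.
  case: (pickP (fun w => e v w)) => [w hw|Hn']; first by right; exists w.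
  move: hpos; rewrite /alpha_out /alpha_in.
  case: pickP => [w hw|_]; first by rewrite Hn' in hw.
  case: pickP => [u hu|_]; first by rewrite Hn in hu.
  by rewrite subrr ltxx.
have [u hu] : exists u, e u v.
  case: hex => [//|[w hw]].
  have [ewv|hwv] := eqVneq w v; first by exists w; rewrite ewv in hw *.
  exact: @conn_in _ e _ _ (Hsc w v) hwv.
have [w1 hw1] : exists w, e v w.
  have [euv|huv] := eqVneq u v; first by exists u; rewrite euv in hu *.
  by apply: (@conn_out _ e v u (Hsc v u)); rewrite eq_sym.
have [w hw Hout] := @out_eq _ _ e a _ _ hw1.
case: (@arg_maxP _ _ _ _ (fun x => e x v)
   (fun x => a x v + rstar v - rstar x) hu) => u0 hu0 Hu0.
have claim : a v w + rstar w - rstar v <= a u0 v + rstar v - rstar u0.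
  rewrite leNgt; apply/negP => hlt.
  have hd : 0 < (a v w + rstar w - rstar v - (a u0 v + rstar v - rstar u0)) / 8.
    by apply: divr_gt0; lra.
  have [N HN] := Hall _ hd.
  have [t ht hst] := Hinf v N.
  have Hs := @step _ _ e a s t; rewrite hst in Hs.
  have [u' hu' Hin] := @in_eq _ _ e (raise_state e a s t).1 _ _ hu.
  have Ho := @out_ge _ _ e (raise_state e a s t).1 _ _ hw.
  rewrite Hin in Hs.
  rewrite (@inv _ _ e a s t _ _ hu') in Hs; rewrite (@inv _ _ e a s t _ _ hw) in Ho.
  have Hu' := Hu0 u' hu'.
  have H1 := HN t ht; have H2 := HN t.+1 (leqW ht).
  move: (H1 v) (H1 w) (H1 u') (H2 v).
  rewrite /cum_raise !ltr_norml => /andP[? ?] /andP[? ?] /andP[? ?] /andP[? ?].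
  simpl in Hu'.
  lra.
exists u0, w; split => //.
have := @in_ge _ _ e a _ _ hu0.
rewrite hrhoE Hout.
lra.
Qed.
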